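(* Let $K$ be a (not necessarily associative) ring with identity $1_K$ and let $L$ be a field. Let $q\colon K\to L$ be a multiplicative quadratic map. Then one of the following holds: (1) there exist a composition algebra $M$ over $L$, with norm $N$, and a ring homomorphism $\varphi\colon K\to M$ such that $q(a)=N(\varphi(a))$ for all $a\in K$; (2) $\operatorname{char} L=2$ and $q$ is a ring homomorphism $K\to L$.
   Context: Let $K,L$ be (not necessarily associative) rings with identity. A map $q\colon K\to L$ is called a multiplicative quadratic map if (i) $q(ab)=q(a)q(b)$ for all $a,b\in K$; (ii) $q(n\cdot 1_K)=n^2\cdot 1_L$ for all $n\in\mathbb{Z}$; (iii) the map $f\colon K\times K\to L$, $f(a,b)=q(a+b)-q(a)-q(b)$, is biadditive. A composition algebra over a field $L$ is a unital, not necessarily associative, $L$-algebra $M$ together with a quadratic form $N\colon M\to L$ (its norm) whose associated bilinear form $N(x+y)-N(x)-N(y)$ is nondegenerate and which satisfies $N(xy)=N(x)N(y)$ for all $x,y\in M$. *)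

(* Defs.v *)
From HB Require Import structures.
From mathcomp Require Import all_boot all_order all_algebra.
Set Implicit Arguments. Unset Strict Implicit. Unset Printing Implicit Defensive.
Import GRing.Theory.
Local Open Scope ring_scope.

Record naRing := NaRing {
  na_carrier :> zmodType;
  na_mul : na_carrier -> na_carrier -> na_carrier;
  na_one : na_carrier;
  na_mulDl : forall x y z, na_mul (x + y) z = na_mul x z + na_mul y z;
  na_mulDr : forall x y z, na_mul x (y + z) = na_mul x y + na_mul x z;
  na_mul1r : forall x, na_mul na_one x = x;
  na_mulr1 : forall x, na_mul x na_one = x
}.

Definition mult_quadratic_map (K : naRing) (L : fieldType) (q : K -> L) : Prop :=
  [/\ (forall a b : K, q (na_mul a b) = q a * q b),
      (forall n : int, q ((na_one K) *~ n) = ((n ^+ 2)%R)%:~R) &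
      (let f := fun a b : K => q (a + b) - q a - q b in
       (forall a b c : K, f (a + b) c = f a c + f b c) /\
       (forall a b c : K, f a (b + c) = f a b + f a c))].

Record naAlgebra (L : fieldType) := NaAlgebra {
  alg_carrier :> lmodType L;
  alg_mul : alg_carrier -> alg_carrier -> alg_carrier;
  alg_one : alg_carrier;
  alg_mulDl : forall x y z, alg_mul (x + y) z = alg_mul x z + alg_mul y z;
  alg_mulDr : forall x y z, alg_mul x (y + z) = alg_mul x y + alg_mul x z;
  alg_scalerAl : forall (c : L) x y, alg_mul (c *: x) y = c *: alg_mul x y;
  alg_scalerAr : forall (c : L) x y, alg_mul x (c *: y) = c *: alg_mul x y;
  alg_mul1r : forall x, alg_mul alg_one x = x;
  alg_mulr1 : forall x, alg_mul x alg_one = x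
}.

Definition polar (L : fieldType) (V : lmodType L) (N : V -> L) (x y : V) : L :=
  N (x + y) - N x - N y.

Definition quadratic_form (L : fieldType) (V : lmodType L) (N : V -> L) : Prop :=
  [/\ (forall (c : L) x, N (c *: x) = c ^+ 2 * N x),
      (forall x y z, polar N (x + y) z = polar N x z + polar N y z),
      (forall (c : L) x y, polar N (c *: x) y = c * polar N x y),
      (forall x y z, polar N x (y + z) = polar N x y + polar N x z) &
      (forall (c : L) x y, polar N x (c *: y) = c * polar N x y)].

Definition nondegenerate (L : fieldType) (V : lmodType L) (N : V -> L) : Prop :=
  forall x, (forall y, polar N x y = 0) -> x = 0.

Definition composition_algebra (L : fieldType) (M : naAlgebra L) (N : M -> L) : Prop :=
  [/\ quadratic_form N, nondegenerate N &
      forall x y : M, N (alg_mul x y) = N x * N y].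

Definition ring_hom_alg (K : naRing) (L : fieldType) (M : naAlgebra L) (phi : K -> M) : Prop :=
  [/\ (forall a b : K, phi (a + b) = phi a + phi b),
      (forall a b : K, phi (na_mul a b) = alg_mul (phi a) (phi b)) &
      phi (na_one K) = alg_one M].

Definition ring_hom_field (K : naRing) (L : fieldType) (q : K -> L) : Prop :=
  [/\ (forall a b : K, q (a + b) = q a + q b),
      (forall a b : K, q (na_mul a b) = q a * q b) &
      q (na_one K) = 1].

(* Main.v *)
Require Import Defs.
From HB Require Import structures.
From mathcomp Require Import all_boot all_order all_algebra ring.
From mathcomp Require Import boolp.
Set Implicit Arguments. Unset Strict Implicit. Unset Printing Implicit Defensive.
Import GRing.Theory.
Local Open Scope ring_scope.

Section Basic.
Variables (K : naRing) (L : fieldType) (q : K -> L).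
Local Notation "a ** b" := (na_mul a b) (at level 40).
Definition fK (a b : K) := q (a + b) - q a - q b.

Definition Fv (v : seq (L * K)) (b : K) : L := \sum_(p <- v) p.1 * fK p.2 b.
Definition Fb (x y : seq (L * K)) : L := \sum_(p <- y) p.1 * Fv x p.2.
Fixpoint Qv (v : seq (L * K)) : L :=
  if v is p :: v' then p.1 ^+ 2 * q p.2 + p.1 * Fv v' p.2 + Qv v' else 0.
Definition mulV (v w : seq (L * K)) : seq (L * K) :=
  [seq (p.1 * s.1, p.2 ** s.2) | p <- v, s <- w].
Definition scaleV (c : L) (v : seq (L * K)) : seq (L * K) := [seq (c * p.1, p.2) | p <- v].

Lemma Fv_nil b : Fv [::] b = 0. Proof. by rewrite /Fv big_nil. Qed.
Lemma Fv_cons p v b : Fv (p :: v) b = p.1 * fK p.2 b + Fv v b.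
Proof. by rewrite /Fv big_cons. Qed.
Lemma Fv_cat v w b : Fv (v ++ w) b = Fv v b + Fv w b.
Proof. by rewrite /Fv big_cat. Qed.
Lemma Fv_scale c v b : Fv (scaleV c v) b = c * Fv v b.
Proof. rewrite /Fv big_map mulr_sumr; apply: eq_bigr => p _ /=; ring. Qed.

End Basic.

Record Mt (K : naRing) (L : fieldType) (q : K -> L) :=
  MkM { mf : K -> L ; mP : exists v : seq (L * K), mf = Fv q v }.
HB.instance Definition _ (K : naRing) (L : fieldType) (q : K -> L) := gen_eqMixin (Mt q).
HB.instance Definition _ (K : naRing) (L : fieldType) (q : K -> L) := gen_choiceMixin (Mt q).

Section MtDefs.
Variables (K : naRing) (L : fieldType) (q : K -> L).
Lemma Mt_eq (g h : Mt q) : mf g =1 mf h -> g = h.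
Proof.
case: g => f1 p1; case: h => f2 p2 /= /funext E; subst f2.
by rewrite (Prop_irrelevance p1 p2).
Qed.
Lemma Mzero_ex : exists v, (fun _ : K => 0 : L) = Fv q v.
Proof. by exists [::]; apply: funext => b; rewrite Fv_nil. Qed.
Lemma Madd_ex (g h : Mt q) : exists v, (fun b => mf g b + mf h b) = Fv q v.
Proof.
case: (mP g) => v Ev; case: (mP h) => w Ew; exists (v ++ w).
by apply: funext => b; rewrite Fv_cat Ev Ew.
Qed.
Lemma Mscale_ex c (g : Mt q) : exists v, (fun b => c * mf g b) = Fv q v.
Proof.
case: (mP g) => v Ev; exists (scaleV c v).
by apply: funext => b; rewrite Fv_scale Ev.
Qed.
Lemma Mopp_ex (g : Mt q) : exists v, (fun b => - mf g b) = Fv q v.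
Proof.
case: (mP g) => v Ev; exists (scaleV (-1) v).
by apply: funext => b; rewrite Fv_scale Ev mulN1r.
Qed.
Definition Mzero : Mt q := MkM Mzero_ex.
Definition Madd g h : Mt q := MkM (Madd_ex g h).
Definition Mopp g : Mt q := MkM (Mopp_ex g).
Definition Mscale c g : Mt q := MkM (Mscale_ex c g).
Lemma MaddA : associative Madd.
Proof. by move=> x y z; apply: Mt_eq => b /=; rewrite addrA. Qed.
Lemma MaddC : commutative Madd.
Proof. by move=> x y; apply: Mt_eq => b /=; rewrite addrC. Qed.
Lemma Madd0 : left_id Mzero Madd.
Proof. by move=> x; apply: Mt_eq => b /=; rewrite add0r. Qed.
Lemma MaddN : left_inverse Mzero Mopp Madd.
Proof. by move=> x; apply: Mt_eq => b /=; rewrite addNr. Qed.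
End MtDefs.

HB.instance Definition _ (K : naRing) (L : fieldType) (q : K -> L) :=
  GRing.isZmodule.Build (Mt q) (@MaddA K L q) (@MaddC K L q) (@Madd0 K L q) (@MaddN K L q).

Section MtDefs2.
Variables (K : naRing) (L : fieldType) (q : K -> L).
Lemma MscaleA a b (v : Mt q) : Mscale a (Mscale b v) = Mscale (a * b) v.
Proof. by apply: Mt_eq => x /=; rewrite mulrA. Qed.
Lemma Mscale1 : left_id 1 (@Mscale K L q).
Proof. by move=> v; apply: Mt_eq => x /=; rewrite mul1r. Qed.
Lemma MscaleDr : right_distributive (@Mscale K L q) +%R.
Proof. by move=> a u v; apply: Mt_eq => x /=; rewrite mulrDr. Qed.
Lemma MscaleDl (v : Mt q) : {morph (@Mscale K L q)^~ v : a b / a + b}.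
Proof. by move=> a b; apply: Mt_eq => x /=; rewrite mulrDl. Qed.
End MtDefs2.

HB.instance Definition _ (K : naRing) (L : fieldType) (q : K -> L) :=
  GRing.Zmodule_isLmodule.Build L (Mt q) (@MscaleA K L q) (@Mscale1 K L q)
     (@MscaleDr K L q) (@MscaleDl K L q).

Lemma mfD (K : naRing) (L : fieldType) (q : K -> L) (g h : Mt q) b :
  mf (g + h) b = mf g b + mf h b.
Proof. by []. Qed.
Lemma mfZ (K : naRing) (L : fieldType) (q : K -> L) c (g : Mt q) b :
  mf (c *: g) b = c * mf g b.
Proof. by []. Qed.
Lemma mf0 (K : naRing) (L : fieldType) (q : K -> L) b :
  mf (0 : Mt q) b = 0.
Proof. by []. Qed.

Section Main.
Variables (K : naRing) (L : fieldType) (q : K -> L).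
Local Notation "a ** b" := (na_mul a b) (at level 40).
Local Notation one := (na_one K).
Local Notation fK := (fK q).
Local Notation Fv := (Fv q).
Local Notation Fb := (Fb q).
Local Notation Qv := (Qv q).
Local Notation mulV := (@mulV K L).
Local Notation scaleV := (@scaleV K L).
Hypothesis qM : forall a b, q (a ** b) = q a * q b.
Hypothesis q2 : q (one + one) = 4%:R.
Hypothesis fDl : forall a b c, fK (a + b) c = fK a c + fK b c.
Hypothesis fDr : forall a b c, fK a (b + c) = fK a b + fK a c.

Lemma fsym a b : fK a b = fK b a.
Proof. rewrite /fK (addrC a b). ring. Qed.

Lemma qD a b : q (a + b) = q a + q b + fK a b.
Proof. rewrite /fK; ring. Qed.

Lemma faa a : fK a a = 2%:R * q a.
Proof.
have -> : fK a a = q (a + a) - q a - q a by [].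
have -> : a + a = (one + one) ** a by rewrite na_mulDl na_mul1r.
rewrite qM q2; ring.
Qed.

Lemma K1 a b c : fK (a ** b) (a ** c) = q a * fK b c.
Proof. rewrite /fK -na_mulDr !qM; ring. Qed.

Lemma K2 a b c : fK (a ** b) (c ** b) = fK a c * q b.
Proof. rewrite /fK -na_mulDl !qM; ring. Qed.

Lemma K3 a b c d : fK (a ** b) (c ** d) + fK (a ** d) (c ** b) = fK a c * fK b d.
Proof.
have H := qM (a + c) (b + d).
rewrite na_mulDl !na_mulDr in H.
rewrite -[_ + (c ** b + c ** d)]addrA [ (a ** d) + _]addrA [a ** d + c ** b]addrC in H.
move: H.
rewrite !qD !fDl !fDr.
rewrite [fK (c ** b) (a ** d)]fsym !K1 !K2 !qM => H.
apply/eqP; rewrite -subr_eq0; apply/eqP.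
move/eqP: H; rewrite -subr_eq0 => /eqP H; rewrite -H.
ring.
Qed.
Lemma Fb_nilr x : Fb x [::] = 0. Proof. by rewrite /Fb big_nil. Qed.
Lemma Fb_nill y : Fb [::] y = 0.
Proof. by rewrite /Fb big1 // => p _; rewrite Fv_nil mulr0. Qed.
Lemma Fb_consr x p y : Fb x (p :: y) = p.1 * Fv x p.2 + Fb x y.
Proof. by rewrite /Fb big_cons. Qed.
Lemma Fb_catr x y y' : Fb x (y ++ y') = Fb x y + Fb x y'.
Proof. by rewrite /Fb big_cat. Qed.
Lemma Fb_sym x y : Fb x y = Fb y x.
Proof.
rewrite /Fb /Fv.
have -> : \sum_(p <- y) p.1 * (\sum_(p0 <- x) p0.1 * fK p0.2 p.2) =
  \sum_(p <- y) \sum_(s <- x) p.1 * s.1 * fK s.2 p.2.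
  by apply: eq_bigr => p _; rewrite mulr_sumr; apply: eq_bigr => s _; ring.
rewrite exchange_big; apply: eq_bigr => s _; rewrite mulr_sumr.
apply: eq_bigr => p _; rewrite fsym; ring.
Qed.
Lemma Fb_consl p x y : Fb (p :: x) y = p.1 * Fv y p.2 + Fb x y.
Proof. by rewrite Fb_sym Fb_consr Fb_sym. Qed.

Lemma Qv_cat v w : Qv (v ++ w) = Qv v + Qv w + Fb v w.
Proof.
elim: v => [|p v IH] /=; first by rewrite Fb_nill; ring.
rewrite Fv_cat IH Fb_consl; ring.
Qed.

Lemma Qv_scale c v : Qv (scaleV c v) = c ^+ 2 * Qv v.
Proof. elim: v => [|p v IH] /=; first by ring. rewrite Fv_scale IH; ring. Qed.

Lemma Fb_self v : Fb v v = 2%:R * Qv v.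
Proof.
elim: v => [|p v IH] /=; first by rewrite Fb_nill; ring.
rewrite Fb_consl Fb_consr Fv_cons faa IH; ring.
Qed.

Lemma mulV_cons p v w :
  mulV (p :: v) w = [seq (p.1 * s.1, p.2 ** s.2) | s <- w] ++ mulV v w.
Proof. by []. Qed.

Lemma FvM v w b : Fv (mulV v w) b =
  \sum_(p <- v) \sum_(s <- w) p.1 * s.1 * fK (p.2 ** s.2) b.
Proof. by rewrite /Fv /mulV big_allpairs_dep. Qed.

Lemma mulLE v w b : Fv (mulV v w) b =
  \sum_(s <- w) s.1 * (fK s.2 one * Fv v b - Fv v (b ** s.2)).
Proof.
rewrite FvM exchange_big; apply: eq_bigr => s _ /=.
rewrite /Fv mulr_sumr -sumrB mulr_sumr; apply: eq_bigr => p _ /=.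
have := K3 p.2 s.2 b one; rewrite !na_mulr1 => H.
have -> : fK (p.2 ** s.2) b = fK p.2 b * fK s.2 one - fK p.2 (b ** s.2).
  by rewrite -H; ring.
ring.
Qed.

Lemma mulRE v w b : Fv (mulV v w) b =
  \sum_(p <- v) p.1 * (fK p.2 one * Fv w b - Fv w (p.2 ** b)).
Proof.
rewrite FvM; apply: eq_bigr => p _ /=.
rewrite /Fv mulr_sumr -sumrB mulr_sumr; apply: eq_bigr => s _ /=.
have := K3 p.2 s.2 one b; rewrite !na_mul1r => H.
have -> : fK (p.2 ** s.2) b = fK p.2 one * fK s.2 b - fK s.2 (p.2 ** b).
  by rewrite -H [fK (p.2 ** b) s.2]fsym; ring.
ring.
Qed.

Lemma mulL_congr v v' w : Fv v =1 Fv v' -> Fv (mulV v w) =1 Fv (mulV v' w).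
Proof. by move=> E b; rewrite !mulLE; apply: eq_bigr => s _; rewrite !E. Qed.
Lemma mulR_congr v w w' : Fv w =1 Fv w' -> Fv (mulV v w) =1 Fv (mulV v w').
Proof. by move=> E b; rewrite !mulRE; apply: eq_bigr => s _; rewrite !E. Qed.

Lemma FvM1 x c a y : Fv (mulV x [:: (c, a)]) y = \sum_(s <- x) s.1 * c * fK (s.2 ** a) y.
Proof. by rewrite FvM; apply: eq_bigr => s _; rewrite big_cons big_nil addr0. Qed.

Lemma L3 x a b : Fb (mulV x [:: (1, a)]) (mulV x [:: (1, b)]) = Qv x * fK a b.
Proof.
elim: x => [|p x IH]; first by rewrite /= Fb_nill; ring.
rewrite !mulV_cons /= Fb_consl Fb_consr Fv_cons IH K1.
have E : Fv (mulV x [:: (1, a)]) (p.2 ** b) + Fv (mulV x [:: (1, b)]) (p.2 ** a)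
   = fK a b * Fv x p.2.
  rewrite !FvM1 -big_split /Fv mulr_sumr; apply: eq_bigr => s _ /=.
  have := K3 s.2 a p.2 b => H.
  rewrite -mulrDr mulr1 H; ring.
have -> : Fv (mulV x [:: (1, a)]) (p.2 ** b) = fK a b * Fv x p.2 - Fv (mulV x [:: (1, b)]) (p.2 ** a).
  by rewrite -E; ring.
rewrite /= [fK b a]fsym; ring.
Qed.

Lemma map_mul_Fv u w y : Fv [seq (u.1 * s.1, u.2 ** s.2) | s <- w] y =
   u.1 * \sum_(s <- w) s.1 * fK (u.2 ** s.2) y.
Proof. by rewrite /Fv big_map mulr_sumr; apply: eq_bigr => s _ /=; ring. Qed.

Lemma L1 u w : Qv [seq (u.1 * s.1, u.2 ** s.2) | s <- w] = u.1 ^+ 2 * q u.2 * Qv w.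
Proof.
elim: w => [|s w IH] /=; first by ring.
rewrite IH map_mul_Fv qM.
have -> : \sum_(s0 <- w) s0.1 * fK (u.2 ** s0.2) (u.2 ** s.2) = q u.2 * Fv w s.2.
  by rewrite /Fv mulr_sumr; apply: eq_bigr => t _; rewrite K1; ring.
ring.
Qed.

Lemma L2 u u' w : Fb [seq (u.1 * s.1, u.2 ** s.2) | s <- w]
                     [seq (u'.1 * s.1, u'.2 ** s.2) | s <- w]
   = u.1 * u'.1 * fK u.2 u'.2 * Qv w.
Proof.
elim: w => [|s w IH] /=; first by rewrite Fb_nill; ring.
rewrite Fb_consl Fb_consr Fv_cons IH !map_mul_Fv K2.
have E : \sum_(t <- w) t.1 * fK (u.2 ** t.2) (u'.2 ** s.2) +
         \sum_(t <- w) t.1 * fK (u'.2 ** t.2) (u.2 ** s.2) = fK u.2 u'.2 * Fv w s.2.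
  rewrite -big_split /Fv mulr_sumr; apply: eq_bigr => t _ /=.
  have := K3 u.2 t.2 u'.2 s.2 => H.
  rewrite [fK (u'.2 ** t.2) _]fsym -mulrDr H; ring.
have -> : \sum_(t <- w) t.1 * fK (u.2 ** t.2) (u'.2 ** s.2) = fK u.2 u'.2 * Fv w s.2 - 
         \sum_(t <- w) t.1 * fK (u'.2 ** t.2) (u.2 ** s.2) by rewrite -E; ring.
rewrite /= [fK u'.2 u.2]fsym; ring.
Qed.

Lemma LFbM u v w : Fb [seq (u.1 * s.1, u.2 ** s.2) | s <- w] (mulV v w) = u.1 * Fv v u.2 * Qv w.
Proof.
elim: v => [|p v IH]; first by rewrite /= Fb_nilr Fv_nil; ring.
rewrite mulV_cons Fb_catr L2 IH Fv_cons fsym; ring.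
Qed.

Lemma QvM v w : Qv (mulV v w) = Qv v * Qv w.
Proof.
elim: v => [|p v IH]; first by rewrite /=; ring.
rewrite mulV_cons Qv_cat L1 IH LFbM /=; ring.
Qed.

Lemma Fv_radical r w : Fv r =1 (fun _ => 0) -> Fv (mulV r w) =1 (fun _ => 0).
Proof. by move=> E b; rewrite mulLE big1 // => s _; rewrite !E; ring. Qed.

Lemma Qv_radical r : (exists a b, fK a b != 0) -> Fv r =1 (fun _ => 0) -> Qv r = 0.
Proof.
move=> [a [b nz]] E.
have := L3 r a b.
rewrite /Fb big1; last by move=> p _; rewrite (Fv_radical _ E); ring.
move/esym/eqP; rewrite mulf_eq0 (negbTE nz) orbF => /eqP //.
Qed.

Lemma Qv_congr v v' : (exists a b, fK a b != 0) -> Fv v =1 Fv v' -> Qv v = Qv v'.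
Proof.
move=> nz E.
pose r := v' ++ scaleV (-1) v.
have Er : Fv r =1 (fun _ => 0) by move=> b; rewrite Fv_cat Fv_scale E; ring.
have H1 : Qv (r ++ v) = Qv v.
  rewrite Qv_cat (Qv_radical nz Er) /Fb big1; first by ring.
  by move=> p _; rewrite Er; ring.
have H2 : Qv (r ++ v) = Qv v'.
  rewrite -catA Qv_cat Qv_cat Qv_scale Fb_catr.
  have -> : Fb (scaleV (-1) v) v = - Fb v v.
    rewrite /Fb -sumrN; apply: eq_bigr => p _; rewrite Fv_scale; ring.
  have -> : Fb v' (scaleV (-1) v) = - Fb v' v.
    rewrite /Fb big_map -sumrN; apply: eq_bigr => p _ /=; ring.
  rewrite Fb_self; ring.
by rewrite -H1 H2.
Qed.



Hypothesis nz : exists a b, fK a b != 0.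

Definition rep (g : Mt q) : seq (L * K) := projT1 (cid (mP g)).
Lemma repE g : mf g =1 Fv (rep g).
Proof. by move=> b; rewrite /rep; case: (cid (mP g)) => v /= ->. Qed.

Definition mulM (g h : Mt q) : Mt q :=
  @MkM K L q (Fv (mulV (rep g) (rep h))) (ex_intro _ _ erefl).
Definition phi (a : K) : Mt q := @MkM K L q (Fv [:: (1, a)]) (ex_intro _ _ erefl).
Definition oneM : Mt q := phi one.
Definition NM (g : Mt q) : L := Qv (rep g).

Lemma NM_eq g v : mf g =1 Fv v -> NM g = Qv v.
Proof. move=> E; apply: Qv_congr nz _ => b; by rewrite -repE E. Qed.

Lemma mulV1l w : mulV [:: (1, one)] w = w.
Proof.
rewrite mulV_cons cats0 -[RHS]map_id; apply: eq_map => -[c e] /=.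
by rewrite mul1r na_mul1r.
Qed.
Lemma mulV1r v : mulV v [:: (1, one)] = v.
Proof.
elim: v => [|[c e] v IH] //; rewrite mulV_cons /= IH.
by rewrite mulr1 na_mulr1.
Qed.

Lemma repphi a : Fv (rep (phi a)) =1 Fv [:: (1, a)].
Proof. by move=> b; rewrite -repE. Qed.

Lemma mulDl_M x y z : mulM (x + y) z = mulM x z + mulM y z.
Proof.
apply: Mt_eq => b; rewrite mfD /= !mulLE -big_split; apply: eq_bigr => s _ /=.
rewrite -!repE !mfD /=; ring.
Qed.
Lemma mulDr_M x y z : mulM x (y + z) = mulM x y + mulM x z.
Proof.
apply: Mt_eq => b; rewrite mfD /= !mulRE -big_split; apply: eq_bigr => s _ /=.
rewrite -!repE !mfD; ring.
Qed.
Lemma scalerAl_M c x y : mulM (c *: x) y = c *: mulM x y.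
Proof.
apply: Mt_eq => b; rewrite mfZ /= !mulLE mulr_sumr; apply: eq_bigr => s _ /=.
rewrite -!repE !mfZ; ring.
Qed.
Lemma scalerAr_M c x y : mulM x (c *: y) = c *: mulM x y.
Proof.
apply: Mt_eq => b; rewrite mfZ /= !mulRE mulr_sumr; apply: eq_bigr => s _ /=.
rewrite -!repE !mfZ; ring.
Qed.
Lemma mul1r_M x : mulM oneM x = x.
Proof.
apply: Mt_eq => b /=; rewrite (mulL_congr _ (repphi one)) mulV1l repE //.
Qed.
Lemma mulr1_M x : mulM x oneM = x.
Proof.
apply: Mt_eq => b /=; rewrite (mulR_congr _ (repphi one)) mulV1r repE //.
Qed.

Definition Malg : naAlgebra L :=
  @NaAlgebra L (Mt q) mulM oneM mulDl_M mulDr_M scalerAl_M scalerAr_M mul1r_M mulr1_M.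

Lemma polarE (g h : Mt q) : polar (NM : Malg -> L) g h = \sum_(p <- rep h) p.1 * mf g p.2.
Proof.
rewrite /polar (@NM_eq (g + h) (rep g ++ rep h)); last first.
  by move=> b; rewrite mfD Fv_cat !repE.
rewrite Qv_cat /NM.
have -> : Qv (rep g) + Qv (rep h) + Fb (rep g) (rep h) - Qv (rep g) - Qv (rep h)
   = Fb (rep g) (rep h) by ring.
by rewrite /Fb; apply: eq_bigr => p _; rewrite repE.
Qed.
Lemma polarE' (g h : Mt q) : polar (NM : Malg -> L) g h = \sum_(p <- rep g) p.1 * mf h p.2.
Proof.
rewrite polarE.
have -> : \sum_(p <- rep h) p.1 * mf g p.2 = Fb (rep g) (rep h).
  by rewrite /Fb; apply: eq_bigr => p _; rewrite repE.
by rewrite Fb_sym /Fb; apply: eq_bigr => p _; rewrite repE.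
Qed.

Lemma comp_alg : composition_algebra (NM : Malg -> L).
Proof.
split.
- split.
  + move=> c x; rewrite (@NM_eq (c *: x) (scaleV c (rep x))).
      by rewrite Qv_scale.
    by move=> b; rewrite mfZ Fv_scale repE.
  + move=> x y z; rewrite !polarE -big_split; apply: eq_bigr => p _ /=.
    ring.
  + move=> c x y; rewrite !polarE mulr_sumr; apply: eq_bigr => p _ /=.
    ring.
  + move=> x y z; rewrite !polarE' -big_split; apply: eq_bigr => p _ /=.
    ring.
  + move=> c x y; rewrite !polarE' mulr_sumr; apply: eq_bigr => p _ /=.
    ring.
- move=> x H; apply: Mt_eq => b; rewrite mf0.
  rewrite repE -(H (phi b : Malg)) polarE' /Fv; apply: eq_bigr => p _ /=.
  by rewrite Fv_cons Fv_nil /= fsym; ring.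
- move=> x y /=.
  rewrite (@NM_eq (mulM x y) (mulV (rep x) (rep y))) //.
  by rewrite QvM.
Qed.

Lemma phi_hom : ring_hom_alg (phi : K -> Malg).
Proof.
split.
- move=> a b; apply: Mt_eq => x; rewrite mfD /= !Fv_cons !Fv_nil /= fDl; ring.
- move=> a b; apply: Mt_eq => x /=.
  rewrite (mulL_congr _ (repphi a)) (mulR_congr _ (repphi b)) /=.
  by rewrite !Fv_cons !Fv_nil /= mulr1.
- by [].
Qed.

Lemma q_NM a : q a = NM (phi a).
Proof. rewrite (@NM_eq (phi a) [:: (1, a)]) //= Fv_nil; ring. Qed.

Lemma main_case : exists (M : naAlgebra L) (N : M -> L) (phi : K -> M),
      composition_algebra N /\ ring_hom_alg phi /\ (forall a : K, q a = N (phi a)).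
Proof.
exists Malg, NM, phi; split; first exact: comp_alg.
split; first exact: phi_hom.
exact: q_NM.
Qed.
End Main.

Theorem theorem1p2 (K : naRing) (L : fieldType) (q : K -> L) :
  mult_quadratic_map q ->
  (exists (M : naAlgebra L) (N : M -> L) (phi : K -> M),
      composition_algebra N /\ ring_hom_alg phi /\ (forall a : K, q a = N (phi a)))
  \/ (2%N \in [pchar L] /\ ring_hom_field q).
Proof.
case=> qM qn H.
have [fDl fDr] : (forall a b c, fK q (a + b) c = fK q a c + fK q b c) /\
                 (forall a b c, fK q a (b + c) = fK q a b + fK q a c) := H.
have q2 : q (na_one K + na_one K) = 4%:R.
  have := qn 2; rewrite -mulr2n. by [].
have q1 : q (na_one K) = 1.
  have := qn 1. by rewrite mulr1z.
case: (pselect (exists a b, fK q a b != 0)) => [nz|Hn].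
  by left; apply: main_case.
have f0 : forall a b, fK q a b = 0.
  move=> a b; case: (eqVneq (fK q a b) 0) => // Hab.
  by exfalso; apply: Hn; exists a, b.
right; split.
  rewrite inE /=; apply/eqP.
  have := faa qM q2 (na_one K); rewrite f0 q1 mulr1 => <- //.
split.
- by move=> a b; rewrite qD f0 addr0.
- exact: qM.
- exact: q1.
Qed.
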